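(* Let $G=(V,E)$ with weight $\mu$ be an infinite, connected, locally finite weighted graph satisfying condition $(p_0)$, and let $m>1$. Let $(p,q)\in G_6=\{(p,q): p<m-1-q,\ q<m-1\}\cup\{(m-1,0)\}$. Then the inequality $\Delta_m u+u^p|\nabla u|^q\le 0$ on $V$ admits no nontrivial positive solution (no volume growth assumption is imposed).
   Context: Setting: $G=(V,E)$ is an infinite, connected, locally finite graph with no loops and no multiple edges; $x\sim y$ means $x$ and $y$ are joined by an edge. A weight is a symmetric function $\mu:V\times V\to[0,\infty)$ with $\mu_{xy}=\mu_{yx}>0$ if and only if $x\sim y$; the vertex measure is $\mu(x)=\sum_{y\sim x}\mu_{xy}$. For $m>1$ and $u:V\to\mathbb R$, $\Delta_m u(x)=\frac{1}{\mu(x)}\sum_{y\sim x}\mu_{xy}|u(y)-u(x)|^{m-2}(u(y)-u(x))$ and $|\nabla u(x)|=\big(\sum_{y\sim x}\frac{\mu_{xy}}{2\mu(x)}(u(y)-u(x))^2\big)^{1/2}$. Condition $(p_0)$: there is a constant $p_0>1$ such that $\mu_{xy}/\mu(x)\ge 1/p_0$ for all $x\sim y$. A nontrivial positive solution of $\Delta_m u+u^p|\nabla u|^q\le 0$ is a non-constant function $u:V\to(0,\infty)$ such that $\Delta_m u(x)+u(x)^p|\nabla u(x)|^q\le 0$ for every $x\in V$, with the conventions $0^0=1$, $0^q=0$ for $q>0$, and, for $q<0$, $|\nabla u(x)|^q=+\infty$ when $|\nabla u(x)|=0$ (so the inequality fails at such $x$). *)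

(* Defs.v *)
From Stdlib Require Import Reals Lra List Relations.
Import ListNotations.
Open Scope R_scope.

(* A locally finite graph on a vertex type V is given by its (finite,
   duplicate-free) neighbour lists nb : V -> list V;  x ~ y  iff  In y (nb x). *)
Definition adj {V : Type} (nb : V -> list V) (x y : V) : Prop := In y (nb x).

Definition infinite_connected_lf_graph {V : Type} (nb : V -> list V) : Prop :=
  (forall x, NoDup (nb x)) /\
  (forall x y, adj nb x y -> adj nb y x) /\
  (forall x, ~ adj nb x x) /\
  (forall x y, clos_refl_trans V (adj nb) x y) /\
  (forall l : list V, exists v, ~ In v l).

Definition is_weight {V : Type} (nb : V -> list V) (mu : V -> V -> R) : Prop :=
  (forall x y, mu x y = mu y x) /\
  (forall x y, 0 <= mu x y) /\
  (forall x y, 0 < mu x y <-> adj nb x y).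

Definition sum_nb {V : Type} (nb : V -> list V) (x : V) (f : V -> R) : R :=
  fold_right Rplus 0 (map f (nb x)).

Definition muV {V : Type} (nb : V -> list V) (mu : V -> V -> R) (x : V) : R :=
  sum_nb nb x (fun y => mu x y).

Definition cond_p0 {V : Type} (nb : V -> list V) (mu : V -> V -> R) : Prop :=
  exists p0, 1 < p0 /\
    forall x y, adj nb x y -> mu x y / muV nb mu x >= 1 / p0.

(* |a|^(m-2) a, with value 0 at a = 0 *)
Definition phim (m a : R) : R :=
  if Rlt_dec 0 a then Rpower a (m - 1)
  else if Rlt_dec a 0 then - Rpower (- a) (m - 1) else 0.

Definition mLap {V : Type} (nb : V -> list V) (mu : V -> V -> R) (m : R)
  (u : V -> R) (x : V) : R :=
  / muV nb mu x * sum_nb nb x (fun y => mu x y * phim m (u y - u x)).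

Definition gradn {V : Type} (nb : V -> list V) (mu : V -> V -> R)
  (u : V -> R) (x : V) : R :=
  sqrt (sum_nb nb x (fun y => mu x y / (2 * muV nb mu x) * (u y - u x) ^ 2)).

(* the inequality Delta_m u + u^p |grad u|^q <= 0 at x, with the conventions
   0^0 = 1, 0^q = 0 (q > 0), 0^q = +oo (q < 0, inequality fails) *)
Definition ineq_at {V : Type} (nb : V -> list V) (mu : V -> V -> R)
  (m p q : R) (u : V -> R) (x : V) : Prop :=
  let g := gradn nb mu u x in
  if Req_EM_T g 0 then
    (if Rlt_dec q 0 then False
     else if Req_EM_T q 0 then mLap nb mu m u x + Rpower (u x) p <= 0
     else mLap nb mu m u x <= 0)
  else mLap nb mu m u x + Rpower (u x) p * Rpower g q <= 0.

Definition nontrivial_pos_solution {V : Type} (nb : V -> list V)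
  (mu : V -> V -> R) (m p q : R) (u : V -> R) : Prop :=
  (forall x, 0 < u x) /\ (exists x y, u x <> u y) /\
  (forall x, ineq_at nb mu m p q u x).

Definition in_G6 (m p q : R) : Prop :=
  (p < m - 1 - q /\ q < m - 1) \/ (p = m - 1 /\ q = 0).

(* Main.v *)
Require Import Defs.
From Stdlib Require Import Reals Lra Lia List Relations.
Import ListNotations.
Open Scope R_scope.

Definition lsum {V : Type} (f : V -> R) (l : list V) := fold_right Rplus 0 (map f l).
Definition lmax {V : Type} (f : V -> R) (l : list V) := fold_right Rmax 0 (map f l).

Lemma lsum_le {V} (f g : V -> R) l : (forall y, In y l -> f y <= g y) -> lsum f l <= lsum g l.
Proof. induction l as [|a l IH]; simpl; intros H; unfold lsum in *; simpl. lra.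
  pose proof (H a (or_introl eq_refl)). pose proof (IH (fun y Hy => H y (or_intror Hy))). lra. Qed.

Lemma lsum_scal {V} (f : V -> R) c l : lsum (fun y => c * f y) l = c * lsum f l.
Proof. induction l; unfold lsum in *; simpl; [ring| rewrite IHl; ring]. Qed.

Lemma lsum_plus {V} (f g : V -> R) l : lsum (fun y => f y + g y) l = lsum f l + lsum g l.
Proof. induction l; unfold lsum in *; simpl; [ring| rewrite IHl; ring]. Qed.

Lemma lsum_ext {V} (f g : V -> R) l : (forall y, f y = g y) -> lsum f l = lsum g l.
Proof. intros H; induction l; unfold lsum in *; simpl; [ring| rewrite IHl, H; ring]. Qed.

Lemma lsum_nonneg {V} (f : V -> R) l : (forall y, In y l -> 0 <= f y) -> 0 <= lsum f l.
Proof. intros H. pose proof (lsum_le (fun _ => 0) f l H).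
  assert (lsum (fun _ : V => 0) l = 0).
  { clear H H0. induction l; unfold lsum in *; simpl. ring. rewrite IHl; ring. }
  lra. Qed.

Lemma lsum_ge_term {V} (f : V -> R) l z : (forall y, In y l -> 0 <= f y) -> In z l -> f z <= lsum f l.
Proof. induction l as [|a l IH]; simpl; intros H Hz; unfold lsum in *; simpl. contradiction.
  destruct Hz as [<-|Hz].
  - pose proof (lsum_nonneg f l (fun y Hy => H y (or_intror Hy))). unfold lsum in *. lra.
  - pose proof (H a (or_introl eq_refl)). pose proof (IH (fun y Hy => H y (or_intror Hy)) Hz). lra. Qed.

Lemma lmax_ge {V} (f : V -> R) l y : In y l -> f y <= lmax f l.
Proof. induction l as [|a l IH]; simpl; intros Hy; unfold lmax in *; simpl. contradiction.
  destruct Hy as [<-|Hy]. apply Rmax_l. eapply Rle_trans. apply IH; auto. apply Rmax_r. Qed.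

Lemma lmax_nonneg {V} (f : V -> R) l : 0 <= lmax f l.
Proof. induction l as [|a l IH]; unfold lmax in *; simpl. lra. eapply Rle_trans. apply IH. apply Rmax_r. Qed.

Lemma lmax_attained {V} (f : V -> R) l : lmax f l = 0 \/ exists y, In y l /\ f y = lmax f l.
Proof. induction l as [|a l IH]; unfold lmax in *; simpl. auto.
  unfold Rmax at 1 3. destruct (Rle_dec (f a) (fold_right Rmax 0 (map f l))).
  - destruct IH as [IH|[y [Hy Hf]]]; auto. right; exists y; auto.
  - right; exists a; auto. Qed.

Lemma rp_pos x c : 0 < Rpower x c.
Proof. unfold Rpower; apply exp_pos. Qed.

Lemma rp_anti x y c : c <= 0 -> 0 < x <= y -> Rpower y c <= Rpower x c.
Proof. intros Hc Hxy.
  replace c with (- (-c)) by ring. rewrite (Rpower_Ropp y (-c)), (Rpower_Ropp x (-c)).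
  apply Rinv_le_contravar. apply rp_pos. apply Rle_Rpower_l; lra. Qed.

Lemma rp_inv x c : 0 < x -> 0 < c -> Rpower (Rpower x c) (/ c) = x.
Proof. intros. rewrite Rpower_mult. rewrite Rinv_r by lra. apply Rpower_1; auto. Qed.

Lemma M_pos {V} (nb : V -> list V) mu x y : is_weight nb mu -> adj nb x y -> 0 < muV nb mu x.
Proof. intros [_ [Hnn Hpos]] Ha.
  change (muV nb mu x) with (lsum (fun y => mu x y) (nb x)).
  pose proof (lsum_ge_term (fun y => mu x y) (nb x) y (fun z _ => Hnn x z) Ha).
  pose proof (proj2 (Hpos x y) Ha). lra. Qed.

Lemma grad_pos {V} (nb : V -> list V) mu (u : V -> R) x y :
  is_weight nb mu -> adj nb x y -> u x <> u y -> 0 < gradn nb mu u x.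
Proof. intros Hw Ha Hne. pose proof (M_pos nb mu x y Hw Ha) as HM.
  destruct Hw as [_ [Hnn Hpos]]. pose proof (proj2 (Hpos x y) Ha).
  unfold gradn. apply sqrt_lt_R0.
  change (sum_nb nb x _) with (lsum (fun y => mu x y / (2 * muV nb mu x) * (u y - u x) ^ 2) (nb x)).
  eapply Rlt_le_trans; [| apply (lsum_ge_term _ _ y)]; auto.
  - apply Rmult_lt_0_compat. apply Rdiv_lt_0_compat; lra.
    assert (u y - u x <> 0) by lra. nra.
  - intros z _. apply Rmult_le_pos. unfold Rdiv. apply Rmult_le_pos. apply Hnn. left; apply Rinv_0_lt_compat; lra. apply pow2_ge_0.
Qed.

Lemma phim_nonneg m d : 0 <= d -> 0 <= phim m d.
Proof. intros. unfold phim. destruct (Rlt_dec 0 d). left; apply rp_pos.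
  destruct (Rlt_dec d 0); lra. Qed.

Lemma phim_lb m d A : 1 < m -> 0 < A -> -A <= d -> - Rpower A (m-1) <= phim m d.
Proof. intros Hm HA Hd. pose proof (rp_pos A (m-1)). unfold phim. destruct (Rlt_dec 0 d).
  pose proof (rp_pos d (m-1)); lra.
  destruct (Rlt_dec d 0). assert (Rpower (-d) (m-1) <= Rpower A (m-1)) by (apply Rle_Rpower_l; lra). lra. lra. Qed.

Lemma phim_pos m d : 0 < d -> phim m d = Rpower d (m-1).
Proof. intros. unfold phim. destruct (Rlt_dec 0 d); lra. Qed.

Definition cst (p0 m q : R) : R :=
  if Rle_dec 0 q then sqrt (/ (2 * p0)) else Rpower p0 (/ (m - 1)) + 1.

Lemma cst_pos p0 m q : 1 < p0 -> 0 < cst p0 m q.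
Proof. intros. unfold cst. destruct (Rle_dec 0 q). apply sqrt_lt_R0. apply Rinv_0_lt_compat; lra.
  pose proof (rp_pos p0 (/ (m-1))); lra. Qed.

Lemma point {V} (nb : V -> list V) mu m p q p0 (u : V -> R) x :
  is_weight nb mu -> 1 < p0 -> (forall x y, adj nb x y -> muV nb mu x / p0 <= mu x y) -> 1 < m ->
  (forall z, 0 < u z) -> ineq_at nb mu m p q u x -> gradn nb mu u x <> 0 ->
  exists y, adj nb x y /\ 0 < u x - u y /\
    Rpower (u x) p * Rpower (cst p0 m q * (u x - u y)) q <= Rpower (u x - u y) (m-1).
Proof.
  intros Hw Hp0 Hmu Hm Hu Hineq Hg.
  pose proof Hw as [_ [Hnn Hpos]].
  destruct (nb x) as [|y0 l0] eqn:Hl.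
  { exfalso. apply Hg. unfold gradn, sum_nb. rewrite Hl. simpl. apply sqrt_0. }
  assert (Hy0 : adj nb x y0) by (unfold adj; rewrite Hl; left; auto).
  pose proof (M_pos nb mu x y0 Hw Hy0) as HM.
  set (M := muV nb mu x) in *.
  set (g := gradn nb mu u x) in *.
  assert (Hgp : 0 < g) by (assert (0 <= g) by (unfold g, gradn; apply sqrt_pos); lra).
  unfold ineq_at in Hineq. fold g in Hineq. destruct (Req_EM_T g 0) as [e|_]; [contradiction|].
  set (S := lsum (fun y => mu x y * phim m (u y - u x)) (nb x)).
  assert (HmL : mLap nb mu m u x = / M * S) by reflexivity.
  rewrite HmL in Hineq.
  set (P := Rpower (u x) p * Rpower g q) in *.
  assert (HP : 0 < P) by (apply Rmult_lt_0_compat; apply rp_pos).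
  assert (HSP : S <= - M * P).
  { replace S with (M * (/ M * S)) by (field; lra). nra. }
  set (A := lmax (fun y => u x - u y) (nb x)).
  assert (HA : 0 < A).
  { destruct (Rle_dec A 0) as [HA|HA]; [|lra]. exfalso.
    assert (0 <= S). { apply lsum_nonneg. intros y Hy. apply Rmult_le_pos. apply Hnn. apply phim_nonneg.
      pose proof (lmax_ge (fun y => u x - u y) (nb x) y Hy). simpl in H. fold A in H. lra. }
    nra. }
  destruct (lmax_attained (fun y => u x - u y) (nb x)) as [HA0|[yA [HyA HfA]]].
  { fold A in HA0. lra. }
  simpl in HfA. fold A in HfA.
  assert (HdA : forall y, In y (nb x) -> - A <= u y - u x).
  { intros y Hy. pose proof (lmax_ge (fun y => u x - u y) (nb x) y Hy). simpl in H. fold A in H. lra. }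
  assert (HSlb : - Rpower A (m-1) * M <= S).
  { unfold M, muV, sum_nb. fold (lsum (fun y => mu x y) (nb x)). rewrite <- lsum_scal.
    apply lsum_le. intros y Hy. pose proof (phim_lb m (u y - u x) A Hm HA (HdA y Hy)).
    pose proof (Hnn x y). nra. }
  assert (HPA : P <= Rpower A (m-1)) by nra.
  exists yA. split; [exact HyA|]. split; [lra|]. rewrite HfA.
  eapply Rle_trans; [|exact HPA]. unfold P. apply Rmult_le_compat_l. left; apply rp_pos.
  assert (Hg2 : g * g = lsum (fun y => mu x y / (2 * M) * (u y - u x) ^ 2) (nb x)).
  { unfold g, gradn. apply sqrt_sqrt. apply lsum_nonneg. intros y _. apply Rmult_le_pos.
    unfold Rdiv. apply Rmult_le_pos. apply Hnn. left; apply Rinv_0_lt_compat; lra. apply pow2_ge_0. }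
  assert (HyAadj : adj nb x yA) by exact HyA.
  pose proof (Hmu x yA HyAadj) as HmuA. fold M in HmuA.
  unfold cst. destruct (Rle_dec 0 q) as [Hq|Hq].
  - apply Rle_Rpower_l; [exact Hq|]. set (c := sqrt (/ (2 * p0))).
    assert (Hc2 : c * c = / (2 * p0)) by (apply sqrt_sqrt; left; apply Rinv_0_lt_compat; lra).
    assert (Hc : 0 < c) by (apply sqrt_lt_R0; apply Rinv_0_lt_compat; lra).
    split. nra.
    assert (Hterm : mu x yA / (2 * M) * (u yA - u x) ^ 2 <= g * g).
    { rewrite Hg2. apply (lsum_ge_term (fun y => mu x y / (2 * M) * (u y - u x) ^ 2)); auto.
      intros y _. apply Rmult_le_pos.
      unfold Rdiv. apply Rmult_le_pos. apply Hnn. left; apply Rinv_0_lt_compat; lra. apply pow2_ge_0. }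
    assert (Hlow : A * A / (2 * p0) <= mu x yA / (2 * M) * (u yA - u x) ^ 2).
    { replace ((u yA - u x) ^ 2) with (A * A) by (rewrite <- HfA; ring).
      unfold Rdiv. rewrite Rinv_mult. rewrite Rinv_mult.
      assert (M / p0 * / M = / p0) by (field; lra).
      assert (/ p0 <= mu x yA * / M).
      { replace (/ p0) with (M / p0 * / M) by (field; lra). apply Rmult_le_compat_r.
        left; apply Rinv_0_lt_compat; lra. exact HmuA. }
      assert (0 < / 2) by lra. nra. }
    assert ((c * A) * (c * A) <= g * g).
    { replace ((c*A)*(c*A)) with ((c*c) * (A*A)) by ring. rewrite Hc2.
      replace (/ (2 * p0) * (A * A)) with (A * A / (2 * p0)) by (field; lra). lra. }
    nra.
  - apply rp_anti; [lra|]. split; [exact Hgp|].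
    set (K := Rpower p0 (/ (m - 1))).
    assert (HK : 0 < K) by apply rp_pos.
    set (B := lmax (fun y => u y - u x) (nb x)).
    assert (HBK : B <= K * A).
    { destruct (Rle_dec B 0) as [HB|HB]. nra.
      destruct (lmax_attained (fun y => u y - u x) (nb x)) as [HB0|[yB [HyB HfB]]].
      { fold B in HB0. lra. }
      simpl in HfB. fold B in HfB.
      pose proof (Hmu x yB HyB) as HmuB. fold M in HmuB.
      set (h := fun y => mu x y * (phim m (u y - u x) + Rpower A (m-1))).
      assert (HSsplit : S = - Rpower A (m-1) * M + lsum h (nb x)).
      { unfold M, muV, sum_nb. fold (lsum (fun y => mu x y) (nb x)). rewrite <- lsum_scal, <- lsum_plus.
        unfold S. apply lsum_ext. intros y. unfold h. ring. }
      assert (Hh : h yB <= lsum h (nb x)).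
      { apply lsum_ge_term; auto. intros y Hy. unfold h. apply Rmult_le_pos. apply Hnn.
        pose proof (phim_lb m (u y - u x) A Hm HA (HdA y Hy)). lra. }
      assert (HhB : h yB = mu x yB * (Rpower B (m-1) + Rpower A (m-1))).
      { unfold h. rewrite HfB. rewrite phim_pos; lra. }
      pose proof (rp_pos A (m-1)). pose proof (rp_pos B (m-1)).
      assert (HBp : Rpower B (m-1) < p0 * Rpower A (m-1)).
      { assert (M / p0 * Rpower B (m-1) <= lsum h (nb x)).
        { rewrite HhB in Hh. eapply Rle_trans; [|exact Hh].
          pose proof (Hnn x yB). set (a := M / p0) in *.
          assert (a * Rpower B (m-1) <= mu x yB * Rpower B (m-1)) by (apply Rmult_le_compat_r; lra).
          assert (0 <= mu x yB * Rpower A (m-1)) by (apply Rmult_le_pos; lra). nra. }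
        assert (0 < M * P) by (apply Rmult_lt_0_compat; lra).
        assert (M / p0 * Rpower B (m - 1) < Rpower A (m-1) * M) by lra.
        assert (M * (Rpower B (m - 1) - p0 * Rpower A (m-1)) < 0).
        { replace (M * (Rpower B (m - 1) - p0 * Rpower A (m - 1))) with
            (p0 * (M / p0 * Rpower B (m - 1) - Rpower A (m - 1) * M)) by (field; lra). nra. }
        nra. }
      assert (Hm1 : 0 < / (m-1)) by (apply Rinv_0_lt_compat; lra).
      rewrite <- (rp_inv B (m-1)) by lra.
      replace (K * A) with (Rpower (p0 * Rpower A (m-1)) (/ (m-1))).
      apply Rle_Rpower_l; lra.
      rewrite <- Rpower_mult_distr by lra. rewrite rp_inv by lra. reflexivity. }
    assert (Hd : forall y, In y (nb x) -> (u y - u x) ^ 2 <= ((K + 1) * A) ^ 2).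
    { intros y Hy. pose proof (HdA y Hy).
      pose proof (lmax_ge (fun y => u y - u x) (nb x) y Hy). simpl in H0. fold B in H0.
      assert (0 <= ((K+1)*A - (u y - u x)) * ((K+1)*A + (u y - u x))) by (apply Rmult_le_pos; nra). nra. }
    assert (g * g <= ((K + 1) * A) ^ 2 / 2).
    { rewrite Hg2.
      replace (((K + 1) * A) ^ 2 / 2) with (((K + 1) * A) ^ 2 / (2 * M) * lsum (fun y => mu x y) (nb x))
        by (change (lsum (fun y => mu x y) (nb x)) with M; field; lra).
      rewrite <- lsum_scal. apply lsum_le. intros y Hy. pose proof (Hd y Hy).
      assert (0 <= mu x y / (2 * M)) by (unfold Rdiv; apply Rmult_le_pos; [apply Hnn| left; apply Rinv_0_lt_compat; lra]).
      replace (((K + 1) * A) ^ 2 / (2 * M) * mu x y) with (mu x y / (2 * M) * ((K + 1) * A) ^ 2) by (field; lra).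
      nra. }
    assert (Hc : 0 < (K+1)*A) by nra.
    destruct (Rle_dec g ((K+1)*A)) as [|Hn]; [assumption|].
    assert (((K+1)*A) * ((K+1)*A) < g * g) by (apply Rmult_le_0_lt_compat; lra).
    simpl in H. nra.
Qed.

Lemma edge_exists {V} (nb : V -> list V) (u : V -> R) a b :
  clos_refl_trans V (adj nb) a b -> u a <> u b -> exists x y, adj nb x y /\ u x <> u y.
Proof. induction 1; intros Hne; eauto. contradiction.
  destruct (Req_EM_T (u x) (u y)) as [e|n]; [apply IHclos_refl_trans2; congruence| apply IHclos_refl_trans1; auto]. Qed.

Theorem mainTheorem7 (V : Type) (nb : V -> list V) (mu : V -> V -> R)
  (m p q : R) :
  infinite_connected_lf_graph nb -> is_weight nb mu -> cond_p0 nb mu ->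
  1 < m -> in_G6 m p q ->
  ~ exists u : V -> R, nontrivial_pos_solution nb mu m p q u.
Proof.
  intros [Hnd [Hsym [Hloop [Hconn Hinf]]]] Hw [p0 [Hp0 Hcond]] Hm HG [u [Hu [[a [b Hab]] Hsol]]].
  pose proof Hw as [_ [Hnn Hpos]].
  assert (Hmu : forall x y, adj nb x y -> muV nb mu x / p0 <= mu x y).
  { intros x y Hxy. pose proof (M_pos nb mu x y Hw Hxy). pose proof (Hcond x y Hxy).
    replace (mu x y) with (mu x y / muV nb mu x * muV nb mu x) by (field; lra).
    unfold Rdiv at 1. rewrite Rmult_comm. apply Rmult_le_compat_r; [lra|]. unfold Rdiv in H0 |- *. lra. }
  destruct (edge_exists nb u a b (Hconn a b) Hab) as [x0 [y0 [Hxy0 Hne0]]].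
  assert (Hg0 : gradn nb mu u x0 <> 0) by (pose proof (grad_pos nb mu u x0 y0 Hw Hxy0 Hne0); lra).
  set (c := cst p0 m q). assert (Hc : 0 < c) by (apply cst_pos; lra).
  assert (Hpt : forall x, gradn nb mu u x <> 0 -> exists y, gradn nb mu u y <> 0 /\ 0 < u x - u y /\
     Rpower (u x) p * Rpower (c * (u x - u y)) q <= Rpower (u x - u y) (m-1)).
  { intros x Hgx. destruct (point nb mu m p q p0 u x Hw Hp0 Hmu Hm Hu (Hsol x) Hgx) as [y [Hxy [HA Hi]]].
    exists y. split; [|split; auto].
    pose proof (grad_pos nb mu u y x Hw (Hsym x y Hxy) ltac:(lra)). lra. }
  destruct HG as [[Hpq Hq] | [Hp Hq]].
  2:{ destruct (Hpt x0 Hg0) as [y [_ [HA Hi]]]. rewrite Hq, Rpower_O in Hi by nra. rewrite Hp in Hi.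
      assert (Rpower (u x0 - u y) (m-1) < Rpower (u x0) (m-1)).
      { apply Rlt_Rpower_l. lra. pose proof (Hu y). lra. }
      lra. }
  set (k := m - 1 - q). assert (Hk : 0 < k) by (unfold k; lra).
  assert (Hkp : 0 < k - p) by (unfold k; lra).
  set (kap := Rpower c q). assert (Hkap : 0 < kap) by apply rp_pos.
  assert (Hkey : forall x y, 0 < u x - u y -> Rpower (u x) p * Rpower (c * (u x - u y)) q <= Rpower (u x - u y) (m-1) ->
            kap * Rpower (u x) p <= Rpower (u x - u y) k).
  { intros x y HA Hi. set (A := u x - u y) in *.
    rewrite <- Rpower_mult_distr in Hi by lra.
    replace (m - 1) with (k + q) in Hi by (unfold k; ring). rewrite Rpower_plus in Hi.
    pose proof (rp_pos A q). pose proof (rp_pos (u x) p). fold kap in Hi.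
    apply (Rmult_le_reg_r (Rpower A q)); auto. nra. }
  set (U0 := u x0).
  set (L := Rpower kap (/ (k - p))).
  assert (HL : 0 < L) by apply rp_pos.
  assert (Hlow : forall x y, 0 < u x - u y -> Rpower (u x) p * Rpower (c * (u x - u y)) q <= Rpower (u x - u y) (m-1) -> L < u x).
  { intros x y HA Hi. pose proof (Hkey x y HA Hi). pose proof (Hu y) as Huy.
    assert (Rpower (u x - u y) k < Rpower (u x) k) by (apply Rlt_Rpower_l; lra).
    assert (Hk2 : Rpower (u x) k = Rpower (u x) (k - p) * Rpower (u x) p)
      by (rewrite <- Rpower_plus; f_equal; ring).
    pose proof (rp_pos (u x) p).
    assert (kap < Rpower (u x) (k-p)) by nra.
    rewrite <- (rp_inv (u x) (k - p)) by lra. unfold L. apply Rlt_Rpower_l.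
    apply Rinv_0_lt_compat; lra. lra. }
  set (mn := Rmin (Rpower L p) (Rpower U0 p)).
  assert (Hmn : 0 < mn) by (unfold mn, Rmin; destruct (Rle_dec _ _); apply rp_pos).
  set (del := Rpower (kap * mn) (/ k)).
  assert (Hdel : 0 < del) by apply rp_pos.
  assert (Hstep : forall x, gradn nb mu u x <> 0 -> u x <= U0 -> exists y, gradn nb mu u y <> 0 /\ u y <= u x - del).
  { intros x Hgx Hx. destruct (Hpt x Hgx) as [y [Hgy [HA Hi]]]. exists y. split; auto.
    pose proof (Hlow x y HA Hi) as HLx. pose proof (Hkey x y HA Hi) as Hkx.
    assert (Hup : mn <= Rpower (u x) p).
    { destruct (Rle_dec 0 p).
      - apply Rle_trans with (Rpower L p). apply Rmin_l. apply Rle_Rpower_l; lra.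
      - apply Rle_trans with (Rpower U0 p). apply Rmin_r. apply rp_anti; lra. }
    assert (del <= u x - u y).
    { rewrite <- (rp_inv (u x - u y) k) by lra. unfold del. apply Rle_Rpower_l.
      left; apply Rinv_0_lt_compat; lra. split. apply Rmult_lt_0_compat; lra. eapply Rle_trans; [|exact Hkx]. apply Rmult_le_compat_l; lra. }
    lra. }
  assert (Hchain : forall n : nat, exists x, gradn nb mu u x <> 0 /\ u x <= U0 - INR n * del).
  { induction n as [|n IH]. exists x0. split; auto. rewrite Rmult_0_l. unfold U0. lra.
    destruct IH as [x [Hgx Hx]]. pose proof (pos_INR n).
    destruct (Hstep x Hgx) as [y [Hgy Hy]]. nra.
    exists y. split; auto. rewrite S_INR. lra. }
  destruct (INR_archimed del U0 Hdel) as [n Hn].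
  destruct (Hchain n) as [x [_ Hx]]. pose proof (Hu x). lra.
Qed.
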